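(* There is a constant $c>0$ such that for every $n\ge1$, every simplicial complex $X$ with $\pi_1(X)\cong\mathbb{Z}^n$ has at least $c\,n^{2/3}$ vertices. *)

(* Defs.v *)
From Stdlib Require Import Relations.
From mathcomp Require Import all_boot all_order all_algebra.
Set Implicit Arguments. Unset Strict Implicit. Unset Printing Implicit Defensive.
Import GRing.Theory.

Definition is_simplicial_complex (T : finType) (X : {set {set T}}) : Prop :=
  forall s, s \in X -> s != set0 /\
    (forall t : {set T}, t \subset s -> t != set0 -> t \in X).

Definition vertices (T : finType) (X : {set {set T}}) : {set T} :=
  [set v | [set v] \in X].

(* Edge paths (Spanier): vertex sequences in which any two consecutive
   vertices span a simplex (possibly equal vertices). A path starting at v0
   is represented as v0 :: l. *)
Definition edge_rel (T : finType) (X : {set {set T}}) : rel T :=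
  fun u v => [set u; v] \in X.

Definition edge_loop (T : finType) (X : {set {set T}}) (v0 : T) (l : seq T) : Prop :=
  path (edge_rel X) v0 l /\ last v0 l = v0.

Inductive ep_step (T : finType) (X : {set {set T}}) : seq T -> seq T -> Prop :=
  | ep_dup : forall a b u, ep_step X (a ++ [:: u; u] ++ b) (a ++ [:: u] ++ b)
  | ep_tri : forall a b u v w, [set u; v; w] \in X ->
      ep_step X (a ++ [:: u; v; w] ++ b) (a ++ [:: u; w] ++ b).

Definition ep_equiv (T : finType) (X : {set {set T}}) : seq T -> seq T -> Prop :=
  clos_refl_sym_trans (seq T) (ep_step X).

(* The edge-path group pi_1(X, v0) is isomorphic to Z^n: there is a map from
   edge loops at v0 to Z^n = 'rV[int]_n which is a homomorphism for
   concatenation of loops, is surjective, and identifies exactly the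
   equivalent loops (so it induces a group isomorphism on classes). *)
Definition pi1_iso_Zn (T : finType) (X : {set {set T}}) (v0 : T) (n : nat) : Prop :=
  exists phi : seq T -> 'rV[int]_n,
    (forall l1 l2, edge_loop X v0 l1 -> edge_loop X v0 l2 ->
        phi (l1 ++ l2) = (phi l1 + phi l2)%R) /\
    (forall z : 'rV[int]_n, exists l, edge_loop X v0 l /\ phi l = z) /\
    (forall l1 l2, edge_loop X v0 l1 -> edge_loop X v0 l2 ->
        (phi l1 = phi l2 <-> ep_equiv X (v0 :: l1) (v0 :: l2))).

(* Main.v *)
Require Import Defs.
From Stdlib Require Import Reals.
From mathcomp Require Import all_boot all_order all_algebra.
From Stdlib Require Import Relation_Operators ClassicalEpsilon Lra.
Set Implicit Arguments. Unset Strict Implicit. Unset Printing Implicit Defensive.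
Import GRing.Theory.


Section RealPart.
Local Open Scope R_scope.
Lemma real_bound (n N : nat) : (1 <= n)%N -> (n * n <= 64 * (N * N * N))%N ->
  Rle (Rmult (Rinv (IZR (Zpos 4))) (Rpower (INR n) (Rdiv (IZR (Zpos 2)) (IZR (Zpos 3))))) (INR N).
Proof.
move=> Hn HnN.
have Hn0 : 0 < INR n by apply: lt_0_INR; apply/ltP.
set y := Rpower (INR n) (2 / 3).
have Hy : 0 < y by apply: exp_pos.
have Hy3 : y ^ 3 = INR n * INR n.
  rewrite /y -(Rpower_pow 3); last by apply: exp_pos.
  rewrite Rpower_mult.
  have -> : 2 / 3 * INR 3 = INR 2 by simpl; field.
  by rewrite Rpower_pow //= Rmult_1_r.
have HR : INR n * INR n <= 64 * INR N ^ 3.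
  have H1 : INR (n * n) <= INR (64 * (N * N * N)) by apply: le_INR; apply/leP.
  rewrite -!multE !mult_INR in H1.
  have E64 : INR 64 = 64 by simpl; lra.
  rewrite E64 in H1; simpl; lra.
have HN : 0 <= INR N by apply: pos_INR.
destruct (Rle_lt_dec y (4 * INR N)) as [H|H].
  lra.
exfalso.
have H2 : 0 < y - 4 * INR N by lra.
have H3 : 0 <= 4 * INR N by lra.
have H4 : y ^ 3 - (4 * INR N) ^ 3 = (y - 4 * INR N) * (y * y + y * (4 * INR N) + (4 * INR N) * (4 * INR N)) by ring.
have H5 : 0 < y * y + y * (4 * INR N) + (4 * INR N) * (4 * INR N) by nra.
have H6 : 0 < (y - 4 * INR N) * (y * y + y * (4 * INR N) + (4 * INR N) * (4 * INR N)) by apply: Rmult_lt_0_compat.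
simpl in *; nra.
Qed.
End RealPart.

From mathcomp Require Import ring zify.
From Stdlib Require Import Lia.

Section Comb.
Variables (T : finType) (X : {set {set T}}).
Hypothesis HX : is_simplicial_complex X.
Local Notation e := (edge_rel X).

Lemma sub_in (s t : {set T}) : s \in X -> t \subset s -> t != set0 -> t \in X.
Proof. by move=> /HX [_ H]; apply: H. Qed.

Lemma e_sym : symmetric e.
Proof. by move=> u v; rewrite /edge_rel setUC. Qed.

Lemma e_l u v : e u v -> [set u] \in X.
Proof.
move=> H; apply: (sub_in H); first by rewrite sub1set !inE eqxx.
by apply/set0Pn; exists u; rewrite inE.
Qed.

Lemma tri_e u v w : [set u; v; w] \in X -> [&& e u v, e v w & e u w].
Proof.
move=> H; rewrite /edge_rel.
have ne : forall a b : T, [set a; b] != set0.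
  by move=> a b; apply/set0Pn; exists a; rewrite !inE eqxx.
rewrite !(sub_in H) //; apply/subsetP=> x; rewrite !inE;
  by case/orP=> /eqP ->; rewrite eqxx ?orbT.
Qed.

Lemma tri_xyx x y : e x y -> [set x; y; x] \in X.
Proof.
move=> H; suff -> : [set x; y; x] = [set x; y] by [].
by apply/setP=> z; rewrite !inE; case: (z == x); case: (z == y).
Qed.

Lemma C_cancel x s a b : path e x s ->
  ep_equiv X (a ++ x :: s ++ rev (belast x s) ++ b) (a ++ x :: b).
Proof.
elim: s x a b => [|y s IH] x a b /=; first by move=> _; apply: rst_refl.
case/andP=> Hxy Hp.
rewrite rev_cons -cats1 -!catA /=.
have -> : a ++ [:: x, y & s ++ rev (belast y s) ++ x :: b]
        = (a ++ [:: x]) ++ y :: s ++ rev (belast y s) ++ x :: b by rewrite -catA.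
apply: rst_trans; first exact: IH.
rewrite -catA /=.
apply: rst_trans.
  have -> : a ++ [:: x, y, x & b] = a ++ [:: x; y; x] ++ b by [].
  apply: rst_step; apply: ep_tri; exact: tri_xyx.
apply: rst_step; exact: (ep_dup X a b x).
Qed.

End Comb.
Local Open Scope ring_scope.

Section Inv.
Variables (T : finType) (X : {set {set T}}) (n : nat) (c : T -> T -> 'rV[int]_n).
Hypothesis c0 : forall u, c u u = 0.
Hypothesis ctri : forall u v w, [set u; v; w] \in X -> c u v + c v w = c u w.

Fixpoint Sx (x : T) (s : seq T) : 'rV[int]_n :=
  if s is y :: s' then c x y + Sx y s' else 0.
Fixpoint Ax (x : T) (s : seq T) : 'M[int]_n :=
  if s is y :: s' then (c x y)^T *m Sx y s' + Ax y s' else 0.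
Definition Sq s := if s is x :: s' then Sx x s' else 0.
Definition Aq s := if s is x :: s' then Ax x s' else 0.

Definition tri (t : T * T * T) := [set t.1.1; t.1.2; t.2] \in X.
Definition tau (t : T * T * T) : 'M[int]_n := (c t.1.1 t.1.2)^T *m c t.1.2 t.2.
Definition sgtau (x : bool * (T * T * T)) := if x.1 then - tau x.2 else tau x.2.
Definition inSpan (M : 'M[int]_n) :=
  exists ts : seq (bool * (T * T * T)), all (fun x => tri x.2) ts /\ M = \sum_(x <- ts) sgtau x.

Lemma inSpan0 : inSpan 0.
Proof. by exists [::]; rewrite big_nil. Qed.

Lemma inSpanD M N : inSpan M -> inSpan N -> inSpan (M + N).
Proof.
move=> [ts [H1 ->]] [us [H2 ->]]; exists (ts ++ us); split.
  by rewrite all_cat H1 H2.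
by rewrite big_cat.
Qed.

Lemma inSpanN M : inSpan M -> inSpan (- M).
Proof.
move=> [ts [H1 ->]]; exists [seq (~~ x.1, x.2) | x <- ts]; split.
  by rewrite all_map.
rewrite big_map -sumrN; apply: eq_bigr => [[[] t]] _; by rewrite /sgtau /= ?opprK.
Qed.

Lemma inSpan_tau t : tri t -> inSpan (tau t).
Proof. by move=> Ht; exists [:: (false, t)]; rewrite /= Ht big_seq1. Qed.

Lemma Sx_cat x s r : Sx x (s ++ r) = Sx x s + Sx (last x s) r.
Proof. by elim: s x => [|y s IH] x /=; rewrite ?add0r // IH addrA. Qed.

Lemma Ax_cat x s r :
  Ax x (s ++ r) = Ax x s + (Sx x s)^T *m Sx (last x s) r + Ax (last x s) r.
Proof.
elim: s x => [|y s IH] x /=; first by rewrite trmx0 mul0mx !add0r.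
rewrite IH Sx_cat mulmxDr linearD /= mulmxDl.
by rewrite !addrA; congr (_ + _); rewrite -!addrA; congr (_ + _); rewrite addrCA.
Qed.

Lemma Sq_mid a x r : Sq (a ++ x :: r) = Sq (rcons a x) + Sx x r.
Proof.
case: a => [|y a] /=; first by rewrite add0r.
by rewrite -cat_rcons Sx_cat last_rcons.
Qed.

Lemma Aq_mid a x r :
  Aq (a ++ x :: r) = Aq (rcons a x) + (Sq (rcons a x))^T *m Sx x r + Ax x r.
Proof.
case: a => [|y a] /=; first by rewrite trmx0 mul0mx !add0r.
by rewrite -cat_rcons Ax_cat last_rcons.
Qed.

Lemma step_inv s s' : ep_step X s s' -> Sq s = Sq s' /\ inSpan (Aq s - Aq s').
Proof.
case=> [a b u|a b u v w Huvw] /=.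
  rewrite !Sq_mid !Aq_mid /= c0 add0r trmx0 mul0mx add0r subrr.
  by split=> //; apply: inSpan0.
have E1 : Sx u [:: v, w & b] = Sx u (w :: b).
  by rewrite /= addrA ctri.
rewrite !Sq_mid !Aq_mid E1; split=> //.
have -> : forall A B C D : 'M[int]_n, A + B + C - (A + B + D) = C - D.
  by move=> A B C D; rewrite opprD addrACA subrr add0r.
have -> : Ax u [:: v, w & b] - Ax u (w :: b) = tau (u, v, w).
  rewrite /= /tau /= -(ctri Huvw).
  rewrite [(c u v + c v w)^T]linearD /= mulmxDr mulmxDl.
  by apply/eqP; rewrite subr_eq !addrA.

by apply: inSpan_tau.
Qed.

Lemma equiv_inv s s' : ep_equiv X s s' -> Sq s = Sq s' /\ inSpan (Aq s - Aq s').
Proof.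
elim=> {s s'} [s s' /step_inv //|s|s s' _ [E H]|s1 s2 s3 _ [E1 H1] _ [E2 H2]].
- by rewrite subrr; split=> //; apply: inSpan0.
- by split=> //; rewrite -opprB; apply: inSpanN.
- split; first by rewrite E1.
  have -> : Aq s1 - Aq s3 = (Aq s1 - Aq s2) + (Aq s2 - Aq s3).
    by rewrite addrA subrK.
  exact: inSpanD.
Qed.

End Inv.

Section Phi.
Variables (T : finType) (X : {set {set T}}) (v0 : T) (n : nat)
  (phi : seq T -> 'rV[int]_n).
Hypothesis HX : is_simplicial_complex X.
Hypothesis Hv0 : [set v0] \in X.
Hypothesis Hhom : forall l1 l2, edge_loop X v0 l1 -> edge_loop X v0 l2 ->
        phi (l1 ++ l2) = (phi l1 + phi l2)%R.
Hypothesis Hker : forall l1 l2, edge_loop X v0 l1 -> edge_loop X v0 l2 ->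
        (phi l1 = phi l2 <-> ep_equiv X (v0 :: l1) (v0 :: l2)).
Local Notation e := (edge_rel X).

Definition reach u := connect e v0 u.
Definition pp u : seq T := if u == v0 then [::] else
  epsilon (inhabits [::]) (fun s => path e v0 s /\ last v0 s = u).
Definition back (s : seq T) := rev (belast v0 s).
Definition E u w := pp u ++ w :: back (pp w).

Lemma pp_spec u : reach u -> path e v0 (pp u) /\ last v0 (pp u) = u.
Proof.
rewrite /pp; case: eqP => [-> //|_] /connectP [s Hs ->].
by apply: (epsilon_spec (inhabits [::]) (fun s' => path e v0 s' /\ last v0 s' = last v0 s)); exists s.
Qed.

Lemma back_path s : path e v0 s -> path e (last v0 s) (back s).
Proof.
by rewrite /back rev_path; apply: sub_path => x y /=; rewrite e_sym.
Qed.

Lemma back_last s : last (last v0 s) (back s) = v0.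
Proof.
case: s => [|y s] //=; rewrite /back /= rev_cons last_rcons //.
Qed.

Lemma rev_v0 s : rev (v0 :: s) = last v0 s :: back s.
Proof. by rewrite lastI rev_rcons. Qed.

Lemma back_belast s : rev (belast (last v0 s) (back s)) = s.
Proof.
have H := lastI (last v0 s) (back s).
rewrite back_last -rev_v0 in H.
have := rcons_inj (etrans (esym (rev_cons v0 s)) H).
by case=> <-; rewrite revK.
Qed.

Lemma reach_e u w : reach u -> e u w -> reach w.
Proof. by move=> Hu Hw; apply: connect_trans Hu (connect1 Hw). Qed.

Lemma loop_cat l1 l2 : edge_loop X v0 l1 -> edge_loop X v0 l2 -> edge_loop X v0 (l1 ++ l2).
Proof.
by move=> [P1 L1] [P2 L2]; split; rewrite ?cat_path ?last_cat L1 ?P1 ?P2.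
Qed.

Lemma E_loop u w : reach u -> e u w -> edge_loop X v0 (E u w).
Proof.
move=> Hu Huw; have Hw := reach_e Hu Huw.
have [Pu Lu] := pp_spec Hu; have [Pw Lw] := pp_spec Hw.
split; rewrite /E ?cat_path ?last_cat Lu /= ?Pu ?Huw.
  by rewrite -{1}Lw back_path.
by rewrite -{1}Lw back_last.
Qed.

Lemma phi0 : phi [::] = 0%R.
Proof.
have L0 : edge_loop X v0 [::] by [].
have := Hhom L0 L0; rewrite /= -{1}[phi [::]]addr0 => /addrI; by move=> <-.
Qed.

Lemma Euu u : reach u -> ep_equiv X (v0 :: E u u) [:: v0].
Proof.
move=> Hu; have [Pu Lu] := pp_spec Hu.
rewrite /E -cat_cons lastI Lu -cats1 -catA /=.
apply: rst_trans; first by apply: rst_step; apply: (ep_dup X _ _ u).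
rewrite catA cats1.
have := lastI v0 (pp u); rewrite Lu => <-.
have := @C_cancel _ X v0 (pp u) [::] [::] Pu; rewrite /= cats0.
by rewrite /back.
Qed.


Lemma Etri u v w : reach u -> [set u; v; w] \in X ->
  ep_equiv X (v0 :: E u v ++ E v w) (v0 :: E u w).
Proof.
move=> Hu Ht; have /and3P [Huv Hvw Huw] := tri_e HX Ht.
have Hv := reach_e Hu Huv; have Hw := reach_e Hv Hvw.
have [Pu Lu] := pp_spec Hu; have [Pv Lv] := pp_spec Hv.
rewrite /E -!catA /=.
apply: rst_trans.
  have := @C_cancel _ X _ _ (v0 :: pp u) (w :: back (pp w)) (back_path Pv).
  by rewrite back_belast Lv => H; exact: H.
have := lastI v0 (pp u); rewrite Lu => Hl.
rewrite -cat_cons Hl -cats1 -!catA /=.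
apply: rst_step.
have -> : belast v0 (pp u) ++ [:: u, w & back (pp w)]
   = belast v0 (pp u) ++ [:: u; w] ++ back (pp w) by [].
exact: ep_tri.
Qed.

Definition cc u w : 'rV[int]_n := if (u == w) || ~~ reach u then 0%R else phi (E u w).

Lemma equiv_phi l1 l2 : edge_loop X v0 l1 -> edge_loop X v0 l2 ->
  ep_equiv X (v0 :: l1) (v0 :: l2) -> phi l1 = phi l2.
Proof. by move=> L1 L2 H; apply/(Hker L1 L2). Qed.

Lemma cc_E u w : reach u -> e u w -> cc u w = phi (E u w).
Proof.
move=> Hu Huw; rewrite /cc Hu orbF; case: eqP => // Euw; subst w.
rewrite -phi0; symmetry; apply: equiv_phi; [exact: E_loop Hu Huw | by [] | exact: Euu].
Qed.

Lemma cc0 u : cc u u = 0%R.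
Proof. by rewrite /cc eqxx. Qed.

Lemma cc_tri u v w : [set u; v; w] \in X -> (cc u v + cc v w = cc u w)%R.
Proof.
move=> Ht; have /and3P [Huv Hvw Huw] := tri_e HX Ht.
case: (boolP (reach u)) => Hu.
  have Hv := reach_e Hu Huv.
  rewrite !cc_E // -Hhom; try exact: E_loop.
  apply: equiv_phi; try exact: E_loop; last exact: Etri.
  by apply: loop_cat; apply: E_loop.
have Hv : ~~ reach v.
  by apply: contra Hu => Hv; apply: reach_e Hv _; rewrite e_sym.
by rewrite /cc (negbTE Hu) (negbTE Hv) !orbT addr0.
Qed.

Lemma phiS l : path e v0 l -> phi (l ++ back (pp (last v0 l))) = Sx cc v0 l.
Proof.
elim/last_ind: l => [|l y IH].
  by rewrite /= /pp eqxx /back /= phi0.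
rewrite rcons_path last_rcons => /andP [Pl Hxy].
set x := last v0 l in Hxy IH.
have Hx : reach x by apply/connectP; exists l.
have [Px Lx] := pp_spec Hx.
have Hy := reach_e Hx Hxy.
have [Py Ly] := pp_spec Hy.
have Bx := back_path Px; rewrite Lx in Bx.
have Bx' := back_last (pp x); rewrite Lx in Bx'.
have By := back_path Py; rewrite Ly in By.
have By' := back_last (pp y); rewrite Ly in By'.
have Lp : edge_loop X v0 (l ++ back (pp x)).
  by split; rewrite ?cat_path ?last_cat //; apply/andP; split.
have Lq : edge_loop X v0 (rcons l y ++ back (pp y)).
  split; rewrite ?cat_path ?last_cat ?rcons_path ?last_rcons //.
  by apply/andP; split => //; apply/andP; split.
rewrite -cats1 Sx_cat -/x /= addr0 -IH //.
rewrite (cc_E Hx Hxy) -Hhom //; last exact: E_loop.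
rewrite cats1.
apply: equiv_phi => //; first exact: loop_cat (E_loop Hx Hxy).
apply: rst_sym.
rewrite /E -!catA.
have := @C_cancel _ X _ _ (belast v0 l) (y :: back (pp y)) (back_path Px).
rewrite back_belast Lx.
have Hl := lastI v0 l; rewrite -/x in Hl.
rewrite -!cat_cons Hl -!cats1 -!catA /=.
have -> : v0 :: (l ++ [:: y]) ++ back (pp y) = belast v0 l ++ [:: x, y & back (pp y)].
  by rewrite -catA -cat_cons Hl cat_rcons.
by apply.
Qed.

Lemma phi_loop l : edge_loop X v0 l -> phi l = Sx cc v0 l.
Proof.
move=> [Pl Ll]; have := phiS Pl; rewrite Ll /pp eqxx /back /= cats0 //.
Qed.

Lemma key l : edge_loop X v0 l -> phi l = 0%R -> inSpan X cc (Ax cc v0 l).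
Proof.
move=> Ll H0.
have Heq : ep_equiv X (v0 :: l) (v0 :: [::]).
  by apply/(Hker Ll) => //; rewrite H0 phi0.
have [_ ] := equiv_inv cc0 cc_tri Heq.
by rewrite /= subr0.
Qed.


Hypothesis Hsurj : forall z : 'rV[int]_n, exists l, edge_loop X v0 l /\ phi l = z.

Lemma Ax_loopcat p q : edge_loop X v0 p -> edge_loop X v0 q ->
  Ax cc v0 (p ++ q) = (Ax cc v0 p + (phi p)^T *m phi q + Ax cc v0 q)%R.
Proof.
move=> Lp Lq; rewrite Ax_cat; case: (Lp) => _ ->.
by rewrite -!phi_loop.
Qed.

Lemma comm k l : inSpan X cc (delta_mx k l - delta_mx l k)%R.
Proof.
have [a1 [L1 P1]] := Hsurj (delta_mx ord0 k).
have [a2 [L2 P2]] := Hsurj (delta_mx ord0 l).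
have [a3 [L3 P3]] := Hsurj (- delta_mx ord0 k)%R.
have [a4 [L4 P4]] := Hsurj (- delta_mx ord0 l)%R.
have L34 := loop_cat L3 L4. have L234 := loop_cat L2 L34.
have L24 := loop_cat L2 L4. have L324 := loop_cat L3 L24.
have K1 := key (loop_cat L1 L234).
have K2 := key (loop_cat L1 L324).
rewrite !Hhom // P1 P2 P3 P4 in K1 K2.
have /K1 {}K1 : (delta_mx ord0 k + (delta_mx ord0 l + (- delta_mx ord0 k + - delta_mx ord0 l)) = 0 :> 'rV[int]_n)%R.
  by rewrite addrCA addNKr subrr.
have /K2 {}K2 : (delta_mx ord0 k + (- delta_mx ord0 k + (delta_mx ord0 l + - delta_mx ord0 l)) = 0 :> 'rV[int]_n)%R.
  by rewrite addNKr subrr.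
have := inSpanD K1 (inSpanN K2).
rewrite !Ax_loopcat // !Hhom // P1 P2 P3 P4.
set A1 := Ax cc v0 a1; set A2 := Ax cc v0 a2; set A3 := Ax cc v0 a3; set A4 := Ax cc v0 a4.
match goal with |- inSpan _ _ ?M -> _ =>
  have -> : M = (delta_mx k l - delta_mx l k)%R end => //.
have TN : forall m : 'rV[int]_n, ((- m)^T = - m^T)%R.
  by move=> m; apply/matrixP=> a b; rewrite !mxE.
rewrite !TN !(mulmxDr, mulmxN, mulNmx, trmx_delta, mul_delta_mx) /=.
apply/matrixP => i j; rewrite !mxE.
ring.
Qed.

End Phi.
Local Open Scope ring_scope.

Section Count.
Variables (T : finType) (X : {set {set T}}) (n : nat) (c : T -> T -> 'rV[int]_n).
Hypothesis Hcomm : forall k l : 'I_n, inSpan X c (delta_mx k l - delta_mx l k).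

Definition Upar (ts : seq (bool * (T * T * T))) : {set T * T * T} :=
  foldr (fun (x : bool * (T * T * T)) (U : {set T * T * T}) => if x.2 \in U then U :\ x.2 else x.2 |: U) set0 ts.

Lemma Upar_sub ts : all (fun x => tri X x.2) ts -> Upar ts \subset [set t | tri X t].
Proof.
elim: ts => [|x ts IH] /=; first by rewrite sub0set.
case/andP=> Hx /IH H; case: ifP => _.
  by apply: subset_trans H; apply: subD1set.
by rewrite subUset H sub1set inE Hx.
Qed.

Lemma even2 (a : int) : (2 %| a *+ 2)%Z.
Proof. have -> : a *+ 2 = a * 2 by rewrite mulr_natr. by apply: dvdz_mull. Qed.

Lemma Upar_parity ts (g : T * T * T -> int) :
  (2 %| \sum_(x <- ts) (if x.1 then - g x.2 else g x.2) - \sum_(t in Upar ts) g t)%Z.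
Proof.
elim: ts => [|x ts IH]; first by rewrite big_nil big_set0 subr0.
rewrite big_cons /=.
set U := Upar ts in IH *.
set S := \sum_(y <- ts) _ in IH *.
set gx := (if x.1 then - g x.2 else g x.2).
have H1 : forall (s : int) (y : int), (2 %| s)%Z -> (2 %| y - s)%Z -> (2 %| y)%Z.
  by move=> s y Hs Hy; rewrite -(subrK s y) rpredD.
case Hin: (x.2 \in U).
  rewrite (big_setD1 x.2 Hin) /= in IH.
  apply: (H1 (gx - g x.2 + g x.2 *+ 2)).
    rewrite /gx; case: x.1 => /=; first by rewrite -opprD -mulr2n addNr.
    by rewrite subrr add0r even2.
  move: IH; congr (2 %| _)%Z; rewrite mulr2n; ring.
rewrite big_setU1 /=; last by rewrite Hin.
apply: (H1 (gx - g x.2)).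
  rewrite /gx; case: x.1 => /=; last by rewrite subrr.
  by rewrite -opprD -mulr2n rpredN even2.
move: IH; congr (2 %| _)%Z; ring.
Qed.


Lemma count_tri m : (m + m <= n)%N -> (m * m <= #|[set t | tri X t]|)%N.
Proof.
move=> Hmn.
have Hm : (m <= n)%N by apply: leq_trans Hmn; apply: leq_addr.
have jlt : forall b : 'I_m, (m + b < n)%N.
  by move=> b; apply: leq_trans Hmn; rewrite ltn_add2l.
pose i (a : 'I_m) : 'I_n := widen_ord Hm a.
pose j (b : 'I_m) : 'I_n := Ordinal (jlt b).
have ij : forall a b, (i a == j b) = false.
  move=> a b; apply/negbTE; rewrite -val_eqE /= neq_ltn.
  by rewrite (leq_trans (ltn_ord a)) ?leq_addr.
pose f (U : {set T * T * T}) : {set 'I_m * 'I_m} :=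
  [set q | ~~ (2 %| \sum_(t in U) tau c t (i q.1) (j q.2))%Z].
set Tri := [set t | tri X t].
have surj : forall S : {set 'I_m * 'I_m}, S \in f @: powerset Tri.
  move=> S.
  pose M := \sum_(q in S) (delta_mx (i q.1) (j q.2) - delta_mx (j q.2) (i q.1)) : 'M[int]_n.
  have : inSpan X c M.
    by apply: big_ind => //; [exact: inSpan0 | exact: inSpanD].
  case=> ts [Hts EM].
  apply/imsetP; exists (Upar ts); first by rewrite powersetE Upar_sub.
  apply/setP => q; rewrite inE.
  have HP := Upar_parity ts (fun t => tau c t (i q.1) (j q.2)).
  have EMq : M (i q.1) (j q.2) = (q \in S)%:R.
    have injij : forall r : 'I_m * 'I_m, ((i q.1 == i r.1) && (j q.2 == j r.2)) = (r == q).
      move=> [r1 r2]; case: q {HP} => q1 q2 /=.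
      apply/andP/eqP => [[/eqP H1 /eqP H2]|[-> ->]] //.
      have E1 : r1 = q1 by apply/val_inj; move/(congr1 val): H1.
      have E2 : r2 = q2 by apply/val_inj; move/(congr1 val): H2 => /= /addnI.
      by rewrite E1 E2.
    rewrite summxE.
    under eq_bigr => r _ do rewrite !mxE ij andFb subr0 injij.
    case: (boolP (q \in S)) => Hq.
      by rewrite (bigD1 q) //= !eqxx big1 ?addr0 // => r /andP [_ /negbTE ->].
    by rewrite big1 // => r Hr; case: eqP Hr => // ->; rewrite (negbTE Hq).
  have EMq' : M (i q.1) (j q.2) = \sum_(x <- ts) (if x.1 then - tau c x.2 (i q.1) (j q.2) else tau c x.2 (i q.1) (j q.2)).
    by rewrite EM summxE; apply: eq_bigr => x _; rewrite /sgtau; case: x.1; rewrite ?mxE.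
  rewrite -EMq' EMq in HP.
  case: (q \in S) HP => HP.
    apply/esym/negP => H2.
    have H3 : (2 %| (1 - \sum_(t in Upar ts) tau c t (i q.1) (j q.2)) + \sum_(t in Upar ts) tau c t (i q.1) (j q.2))%Z by rewrite rpredD.
    by move: H3; rewrite subrK.
  by rewrite sub0r rpredN in HP; rewrite HP.
have : (#|powerset [set: 'I_m * 'I_m]| <= #|powerset Tri|)%N.
  apply: leq_trans (leq_imset_card f _).
  by apply: subset_leq_card; apply/subsetP => S _; apply: surj.
by rewrite !card_powerset cardsT card_prod card_ord leq_exp2l.
Qed.

End Count.

Theorem mainTheorem8 :
  exists c : R, Rlt (IZR Z0) c /\
    forall (n : nat) (T : finType) (X : {set {set T}}) (v0 : T),
      (1 <= n)%N ->
      is_simplicial_complex X ->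
      [set v0] \in X ->
      pi1_iso_Zn X v0 n ->
      Rle (Rmult c (Rpower (INR n) (Rdiv (IZR (Zpos 2)) (IZR (Zpos 3))))) (INR #|vertices X|).
Proof.
exists (Rinv (IZR (Zpos 4))); split.
  by apply: Rinv_0_lt_compat; apply: IZR_lt.
move=> n T X v0 Hn HX Hv0 [phi [Hhom [Hsurj Hker]]].
apply: real_bound => //.
set N := #|vertices X|.
set m := n./2.
have Hm : (m + m <= n)%N.
  by rewrite addnn -{1}(odd_double_half n) leq_addl.
have Hn2 : (n <= m + m + 1)%N.
  by rewrite addnn -{1}(odd_double_half n) addnC leq_add2l leq_b1.
have Hc := count_tri (comm HX Hhom Hker Hsurj) Hm.
have HT : (#|[set t | tri X t]| <= N * N * N)%N.
  rewrite /N -!cardsX; apply: subset_leq_card; apply/subsetP => [[[u v] w]].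
  rewrite !inE /tri /= => Ht.
  have /and3P [Huv Hvw Huw] := tri_e HX Ht.
  have Hwv : edge_rel X w v by rewrite e_sym.
  by rewrite (e_l HX Huv) (e_l HX Hvw) (e_l HX Hwv).
have HN : (0 < N)%N by apply/card_gt0P; exists v0; rewrite inE.
have HK : (1 <= N * N * N)%N by rewrite !muln_gt0 HN.
move: Hc HT HK Hn2; set K := (N * N * N)%N; set Tc := #|_|.
move=> Hc HT HK Hn2.
have HmK : (m * m <= K)%N by apply: leq_trans HT.
clearbody K.
have Hmk : (m <= K)%N.
  case: m HmK {Hm Hn2 Hc} => [|m'] // H; apply: leq_trans H; exact: leq_pmulr.
have Hnn : (n * n <= (m + m + 1) * (m + m + 1))%N by apply: leq_mul.
nia.
Qed.
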